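(* Let $X$ be a minimal shift space over $\mathcal{A}$ such that the extension graph $\mathcal{E}_X(\varepsilon)$ of the empty word is connected. Then $X$ has a bispecial letter, i.e., a letter $a\in\mathcal{A}$ that is both left special and right special.
   Context: A shift space over a finite alphabet $\mathcal{A}$ ($|\mathcal{A}|\ge2$) is a nonempty closed shift-invariant $X\subseteq\mathcal{A}^{\mathbb{Z}}$ whose language $\mathcal{L}(X)$ contains every letter; it is minimal if it has no nonempty proper closed shift-invariant subset. For $w\in\mathcal{L}(X)$, $E^L_X(w)=\{a:aw\in\mathcal{L}(X)\}$, $E^R_X(w)=\{b:wb\in\mathcal{L}(X)\}$; $w$ is left special if $|E^L_X(w)|\ge2$, right special if $|E^R_X(w)|\ge2$. $\mathcal{E}_X(w)$ is the bipartite graph on the disjoint union of $\{a^L:a\in E^L_X(w)\}$ and $\{b^R:b\in E^R_X(w)\}$ with an edge $\{a^L,b^R\}$ whenever $awb\in\mathcal{L}(X)$. *)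

(* Defs.v *)
From Stdlib Require Import ZArith Relation_Operators.
From mathcomp Require Import all_boot.

Set Implicit Arguments.
Unset Strict Implicit.
Unset Printing Implicit Defensive.

Section Shifts.
Variable A : finType.

Definition config := Z -> A.

Definition shift (x : config) : config := fun i => x (i + 1)%Z.

(* closed in the product topology: any x all of whose central windows
   x_[-n,n] are matched by some point of X (i.e. x in the closure of X,
   cylinders forming a neighbourhood basis) lies in X *)
Definition closed_set (X : config -> Prop) : Prop :=
  forall x : config,
    (forall n : nat, exists y, X y /\
        forall i : Z, (- Z.of_nat n <= i <= Z.of_nat n)%Z -> y i = x i) ->
    X x.

Definition shift_invariant (X : config -> Prop) : Prop :=
  forall x, X x <-> X (shift x).

Definition nonempty (X : config -> Prop) : Prop := exists x, X x.

Definition occurs_at (w : seq A) (x : config) (i : Z) : Prop :=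
  forall k : nat, (k < size w)%N -> x (i + Z.of_nat k)%Z = nth (x i) w k.

Definition lang (X : config -> Prop) (w : seq A) : Prop :=
  exists x, X x /\ exists i : Z, occurs_at w x i.

Definition shift_space (X : config -> Prop) : Prop :=
  nonempty X /\ closed_set X /\ shift_invariant X /\
  forall a : A, lang X [:: a].

Definition minimal_shift (X : config -> Prop) : Prop :=
  shift_space X /\
  forall Y : config -> Prop,
    nonempty Y -> closed_set Y -> shift_invariant Y ->
    (forall x, Y x -> X x) -> forall x, X x -> Y x.

Definition ext_left (X : config -> Prop) (w : seq A) (a : A) : Prop :=
  lang X (a :: w).
Definition ext_right (X : config -> Prop) (w : seq A) (b : A) : Prop :=
  lang X (rcons w b).

Definition left_special (X : config -> Prop) (w : seq A) : Prop :=
  exists a a', a <> a' /\ ext_left X w a /\ ext_left X w a'.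
Definition right_special (X : config -> Prop) (w : seq A) : Prop :=
  exists b b', b <> b' /\ ext_right X w b /\ ext_right X w b'.

(* extension graph E_X(w): vertices inl a = a^L (a in E^L(w)),
   inr b = b^R (b in E^R(w)); undirected edge {a^L, b^R} iff awb in L(X) *)
Definition ext_vertex (X : config -> Prop) (w : seq A) (v : A + A) : Prop :=
  match v with
  | inl a => ext_left X w a
  | inr b => ext_right X w b
  end.

Definition ext_edge (X : config -> Prop) (w : seq A) (u v : A + A) : Prop :=
  match u, v with
  | inl a, inr b => lang X (a :: rcons w b)
  | inr b, inl a => lang X (a :: rcons w b)
  | _, _ => False
  end.

Definition ext_graph_connected (X : config -> Prop) (w : seq A) : Prop :=
  (exists v, ext_vertex X w v) /\
  forall u v, ext_vertex X w u -> ext_vertex X w v ->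
    clos_refl_trans (A + A) (ext_edge X w) u v.

End Shifts.

(* Main.v *)
Require Import Defs.
From Stdlib Require Import ZArith Relation_Operators Lia Classical FunctionalExtensionality.
From mathcomp Require Import all_boot.

Lemma L_shiftZ (A : finType) (X : config A -> Prop) (x : config A) :
  shift_invariant X -> X x -> forall k, X (fun i => x (i + k)%Z).
Proof.
move=> Hinv Hx k; induction k as [|m Hm|m Hm] using Z.peano_ind.
- have -> : (fun i => x (i + 0)%Z) = x.
    by apply: functional_extensionality => i; rewrite Z.add_0_r.
  exact Hx.
-
  have -> : (fun i => x (i + Z.succ m)%Z) = Defs.shift (fun i => x (i + m)%Z).
    apply: functional_extensionality => i; rewrite /Defs.shift; f_equal; lia.
  by apply (proj1 (Hinv _)).
- apply (proj2 (Hinv _)).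
  have -> : Defs.shift (fun i => x (i + Z.pred m)%Z) = (fun i => x (i + m)%Z).
    apply: functional_extensionality => i; rewrite /Defs.shift; f_equal; lia.
  exact Hm.
Qed.

Lemma L_lang2 (A : finType) (X : config A -> Prop) (z : config A) (i : Z) :
  X z -> lang X [:: z i; z (i + 1)%Z].
Proof.
move=> Hz; exists z; split => //; exists i => k Hk.
case: k Hk => [|[|k]] Hk //=; by rewrite Z.add_0_r.
Qed.

Lemma L_lang2_inv (A : finType) (X : config A -> Prop) (a b : A) :
  lang X [:: a; b] -> exists z i, X z /\ z i = a /\ z (i + 1)%Z = b.
Proof.
move=> [z [Hz [i Hi]]]; exists z, i; split => //.
have H0 := Hi 0%N erefl; have H1 := Hi 1%N erefl.
rewrite /= Z.add_0_r in H0; split => //.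
Qed.

Lemma L_lang1_inv (A : finType) (X : config A -> Prop) (a : A) :
  shift_invariant X -> lang X [:: a] -> exists z, X z /\ z 0%Z = a.
Proof.
move=> Hinv [z [Hz [i Hi]]]; exists (fun j => z (j + i)%Z); split.
  exact: (@L_shiftZ A X z Hinv Hz i).
have H0 := Hi 0%N erefl; rewrite /= Z.add_0_r in H0; by rewrite Z.add_0_l.
Qed.

Lemma L_reach (A : finType) (X : config A -> Prop) w (S : A + A -> Prop) :
  (forall u v, S u -> ext_edge X w u v -> S v) ->
  forall u v, clos_refl_trans _ (ext_edge X w) u v -> S u -> S v.
Proof.
move=> HS u v H; elim: H => [x y Hxy|x|x y z _ IH1 _ IH2] Hx; eauto.
Qed.

Theorem mainTheorem13 (A : finType) (X : config A -> Prop) :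
  (2 <= #|A|)%N ->
  minimal_shift X ->
  ext_graph_connected X [::] ->
  exists a : A, left_special X [:: a] /\ right_special X [:: a].
Proof.
move=> H2 [[_ [Hcl [Hinv Hlet]]] Hmin] [_ Hc].
apply: NNPP => Hno.
pose LS a := left_special X [:: a].
pose RS a := right_special X [:: a].
have nb : forall a, LS a -> ~ RS a by move=> a H1 H3; apply: Hno; exists a.
have /card_gt1P [c [c' [_ _ ncc]]] := H2.
have other : forall a : A, exists a', a' <> a.
  move=> a; case: (eqVneq c a) => [<-|ne].
  - by exists c'; apply/eqP; rewrite eq_sym.
  - by exists c; apply/eqP.
have det : forall a b b', ~ RS a -> lang X [:: a; b] -> lang X [:: a; b'] -> b = b'.
  move=> a b b' nR H1 H3; apply: NNPP => ne; apply: nR; exists b, b'; by split.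
have detL : forall a a' b, ~ LS b -> lang X [:: a; b] -> lang X [:: a'; b] -> a = a'.
  move=> a a' b nL H1 H3; apply: NNPP => ne; apply: nL; exists a, a'; by split.
have succLS : forall a b, LS a -> lang X [:: a; b] -> LS b.
  move=> a b La Hab; apply: NNPP => nLb.
  have [a' na'] := other a.
  have HS : forall u v, (u = inl a \/ u = inr b) -> ext_edge X [::] u v ->
      (v = inl a \/ v = inr b).
    move=> u [v'|v'] [->|->] /= H; try by case: H.
    - left; congr inl; exact: (detL v' a b nLb H Hab).
    - right; congr inr; symmetry; exact: (det a b v' (nb a La) Hab H).
  have := @L_reach A X [::] _ HS _ _ (Hc (inl a) (inl a') (Hlet a) (Hlet a')) (or_introl erefl).
  by case => [[e]|//]; apply: na'.
case: (classic (exists e, LS e)) => [[e Le]|Hn]; last first.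
  have nL : forall a, ~ LS a by move=> a La; apply: Hn; exists a.
  have HS : forall u v, (u = inl c \/ exists b, u = inr b /\ lang X [:: c; b]) ->
      ext_edge X [::] u v ->
      (v = inl c \/ exists b, v = inr b /\ lang X [:: c; b]).
    move=> u [v'|v'] [->|[b [-> Hb]]] /= H; try by case: H.
    - left; congr inl; exact: (detL v' c b (nL b) H Hb).
    - by right; exists v'.
  have := @L_reach A X [::] _ HS _ _ (Hc (inl c) (inl c') (Hlet c) (Hlet c')) (or_introl erefl).
  case => [[e]|[b [e _]]] //.
  by move: ncc; rewrite e eqxx.
have allL : forall a, LS a.
  have [x [Hx Hx0]] := @L_lang1_inv A X _ Hinv (Hlet e).
  have Lx : forall i, (0 <= i)%Z -> LS (x i).
    apply: natlike_ind; first by rewrite Hx0.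
    move=> i Hi IH; rewrite -Z.add_1_r; exact: (succLS _ _ IH (@L_lang2 A X x i Hx)).
  pose f := fun (i : 'I_(#|A|.+1)) => x (Z.of_nat i).
  have nf : ~ injective f by move=> /leq_card; rewrite card_ord ltnn.
  have [i [j [Hij nij]]] : exists i j, f i = f j /\ i <> j.
    apply: NNPP => Hn; apply: nf => i j Hij; apply: NNPP => nij; apply: Hn; exists i, j; by split.
  have [P [Q [HP [HQ HPQ]]]] : exists P Q, (0 <= P)%Z /\ (0 < Q)%Z /\ x P = x (P + Q)%Z.
    have nij' : (nat_of_ord i) <> (nat_of_ord j) by move=> E; apply: nij; apply: val_inj.
    rewrite /f in Hij.
    case: (Z.lt_total (Z.of_nat i) (Z.of_nat j)) => [lt|[eq|gt]].
    - exists (Z.of_nat i), (Z.of_nat j - Z.of_nat i)%Z; split; [lia|split;[lia|]].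
      rewrite Hij; f_equal; lia.
    - lia.
    - exists (Z.of_nat j), (Z.of_nat i - Z.of_nat j)%Z; split; [lia|split;[lia|]].
      rewrite -Hij; f_equal; lia.
  have per1 : forall m, (0 <= m)%Z -> x (P + m + Q)%Z = x (P + m)%Z.
    apply: natlike_ind; first by rewrite Z.add_0_r.
    move=> m Hm IH.
    have E1 : x (P + Z.succ m + Q)%Z = x ((P + m + Q) + 1)%Z by f_equal; lia.
    have E2 : x (P + Z.succ m)%Z = x ((P + m) + 1)%Z by f_equal; lia.
    rewrite E1 E2; apply: (det (x (P + m)%Z)).
    - apply: nb; apply: Lx; lia.
    - have := @L_lang2 A X x (P + m + Q)%Z Hx; by rewrite IH.
    - exact: (@L_lang2 A X x _ Hx).
  have perj : forall j, (0 <= j)%Z -> forall r, (0 <= r)%Z -> x (P + r + j * Q)%Z = x (P + r)%Z.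
    apply: natlike_ind; first by move=> r _; rewrite Z.mul_0_l Z.add_0_r.
    move=> k Hk IH r Hr.
    have -> : x (P + r + Z.succ k * Q)%Z = x (P + (r + k * Q) + Q)%Z by f_equal; lia.
    rewrite per1; last by nia.
    have -> : (P + (r + k * Q))%Z = (P + r + k * Q)%Z by lia.
    exact: IH.
  have permod : forall k, (0 <= k)%Z -> x (P + k)%Z = x (P + k mod Q)%Z.
    move=> k Hk; have Hd := Z.div_mod k Q ltac:(lia).
    have Hr := Z.mod_pos_bound k Q HQ.
    have Hq : (0 <= k / Q)%Z by apply: Z.div_pos; lia.
    rewrite -(perj (k / Q)%Z Hq (k mod Q)%Z (proj1 Hr)); f_equal; lia.
  pose Y := fun z : config A => X z /\ forall i, LS (z i).
  pose y := fun i => x (P + i mod Q)%Z.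
  have Yy : Y y.
    split.
    - apply: Hcl => n; exists (fun i => x (i + (P + Z.of_nat n * Q))%Z); split.
        exact: (@L_shiftZ A X x Hinv Hx).
      move=> t Ht /=; rewrite /y -(Z.mod_add t (Z.of_nat n) Q); last by lia.
      rewrite -permod; [f_equal; lia | nia].
    - move=> t; apply: Lx; have := Z.mod_pos_bound t Q HQ; lia.
  have Ycl : closed_set Y.
    move=> z Hz; split.
    - apply: Hcl => n; have [w [[Hw _] Hwz]] := Hz n; by exists w.
    - move=> t; have [w [[_ Lw] Hwz]] := Hz (Z.abs_nat t); rewrite -Hwz; [exact: Lw | lia].
  have Yinv : shift_invariant Y.
    move=> z; split => [[Hz Lz]|[Hz Lz]]; split.
    - by apply (proj1 (Hinv z)).
    - move=> t; rewrite /Defs.shift; exact: Lz.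
    - by apply (proj2 (Hinv z)).
    - move=> t; have := Lz (t - 1)%Z; by rewrite /Defs.shift Z.sub_add.
  have Ysub : forall z, Y z -> X z by move=> z [].
  have HXY := Hmin Y (ex_intro _ y Yy) Ycl Yinv Ysub.
  move=> a; have [z [Hz Hz0]] := @L_lang1_inv A X _ Hinv (Hlet a); rewrite -Hz0; exact: (HXY z Hz).2.
have HS : forall u v, (u = inr c \/ exists a, u = inl a /\ lang X [:: a; c]) ->
    ext_edge X [::] u v ->
    (v = inr c \/ exists a, v = inl a /\ lang X [:: a; c]).
  move=> u [v'|v'] [->|[a [-> Ha]]] /= H; try by case: H.
  - by right; exists v'.
  - left; congr inr; symmetry; exact: (det a c v' (nb a (allL a)) Ha H).
have := @L_reach A X [::] _ HS _ _ (Hc (inr c) (inr c') (Hlet c) (Hlet c')) (or_introl erefl).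
case => [[E]|[a [E _]]] //.
by move: ncc; rewrite E eqxx.
Qed.
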